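(* Consider a run of Algorithm 3 (described in the context). Fix a hypercube $I_j$ and a run on $I_j$ of length $\zeta$ (number of queries), and suppose that a total of $\xi$ signals were corrupted during this run. Then the pricing rounds of this run incur total pricing loss $L\cdot O(\zeta\eta_0+\xi\tau_0)$, with an absolute constant.
   Context: Problem. Fix $L>0$, $d\ge 1$, horizon $T\ge 2$. An adversary fixes an unknown $f:[0,1]^d\to[0,L]$ with $|f(x)-f(y)|\le L\|x-y\|_\infty$. In each round $t=1,\dots,T$: the adversary chooses $x_t\in[0,1]^d$; the learner observes $x_t$ and posts $q_t$; the adversary observes $q_t$ and sends $\sigma_t\in\{0,1\}$. With $\sigma(u)=1$ if $u>0$, $0$ if $u\le 0$: uncorrupted rounds have $\sigma_t=\sigma(q_t-f(x_t))$, corrupted rounds $\sigma_t=1-\sigma(q_t-f(x_t))$; the adversary chooses adaptively which rounds to corrupt, at most $C$ in total, $C$ unknown to the learner. The pricing loss of round $t$ is $f(x_t)-q_t\cdot\mathbb{1}[q_t\le f(x_t)]$. $\mathtt{len}$ denotes length of an interval and side length of a hypercube. $\mathtt{MidpointQuery}(I,Y)$, $Y=[a,b]$: guess $q=(a+b)/2$; if $\sigma_t=1$ return $Y\cap[0,q+L\,\mathtt{len}(I)]$, if $\sigma_t=0$ return $Y\cap[q-L\,\mathtt{len}(I),\infty)$. Algorithm 3 (parameters $\eta_0=T^{-1/(d+1)}$ and a schedule $\tau_0\ge1$). Uniformly partition $[0,1]^d$ into hypercubes of side length $\Theta(\eta_0)$; each hypercube $I_j$ has range $Y_j$ (initially $[0,L]$)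 and counter $c_j$ (initially $0$). In round $t$, with $I_j\ni x_t$: if $\mathtt{len}(Y_j)<10L\eta_0$ ($I_j$ pricing-ready), set $c_j:=c_j+1$; if $c_j>\tau_0$ guess $\max(Y_j)$ (checking round) and set $c_j:=0$, else guess $\min(Y_j)$ (pricing round). The learner becomes ''surprised'' when a checking round receives $\sigma_t=0$ or a pricing round receives $\sigma_t=1$; it then sets $Y_j:=[0,L]$, $c_j:=0$. If $I_j$ is not pricing-ready, it performs a searching round $Y_j:=\mathtt{MidpointQuery}(I_j,Y_j)$. Runs. For a fixed hypercube $I_j$, a run is the set of queries (rounds whose context lies in $I_j$) from the start of the algorithm or from the most recent reset of $Y_j$ up to the round in which the learner becomes surprised on $I_j$ (or until the algorithm terminates). Its length is the number of such queries. *)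

(* Defs.v *)
From Stdlib Require Import Reals Lra Lia List.
Open Scope R_scope.

(* sigma(u) = 1 if u > 0, 0 if u <= 0; signals are booleans (true = 1). *)
Definition sgn (u : R) : bool := if Rlt_dec 0 u then true else false.

(* Points of R^d are functions nat -> R, only coordinates i < d matter. *)
Definition supnorm (d : nat) (v : nat -> R) : R :=
  fold_right Rmax 0 (map (fun i => Rabs (v i)) (seq 0 d)).

Definition in_unit_cube (d : nat) (x : nat -> R) : Prop :=
  forall i, (i < d)%nat -> 0 <= x i <= 1.

Definition in_grid_cube (d : nat) (s : R) (k : nat -> nat) (x : nat -> R) : Prop :=
  forall i, (i < d)%nat -> INR (k i) * s <= x i <= (INR (k i) + 1) * s.

Definition valid_valuation (d : nat) (L : R) (f : (nat -> R) -> R) : Prop :=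
  (forall x, in_unit_cube d x -> 0 <= f x <= L) /\
  (forall x y, in_unit_cube d x -> in_unit_cube d y ->
     Rabs (f x - f y) <= L * supnorm d (fun i => x i - y i)).

Definition eta0 (d T : nat) : R := Rpower (INR T) (- / INR (S d)).

(* State of one hypercube: range Y = [lo, hi] and counter c. *)
Record hstate := HState { lo : R; hi : R; cnt : nat }.

Definition init_state (L : R) : hstate := HState 0 L 0.

Inductive rkind := Searching | Pricing | Checking.

(* Parameters: Lipschitz constant L, eta0, schedule tau0, side length s of I_j. *)
Section Alg.
Variables (L eta tau0 s : R).

Definition ready (st : hstate) : bool :=
  if Rlt_dec (hi st - lo st) (10 * L * eta) then true else false.

Definition kind_of (st : hstate) : rkind :=
  if ready st then
    (if Rlt_dec tau0 (INR (S (cnt st))) then Checking else Pricing)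
  else Searching.

Definition guess (st : hstate) : R :=
  match kind_of st with
  | Checking => hi st
  | Pricing => lo st
  | Searching => (lo st + hi st) / 2
  end.

Definition surprised (st : hstate) (sig : bool) : bool :=
  match kind_of st with
  | Checking => negb sig
  | Pricing => sig
  | Searching => false
  end.

Definition midpoint_query (a b : R) (sig : bool) : R * R :=
  let q := (a + b) / 2 in
  if sig then (Rmax a 0, Rmin b (q + L * s))
  else (Rmax a (q - L * s), b).

Definition step (st : hstate) (sig : bool) : hstate :=
  if surprised st sig then init_state L else
  match kind_of st with
  | Checking => HState (lo st) (hi st) 0
  | Pricing => HState (lo st) (hi st) (S (cnt st))
  | Searching =>
      let '(a', b') := midpoint_query (lo st) (hi st) sig in HState a' b' (cnt st)
  end.

(* state before the k-th query (0-indexed) of a run started from [0,L], c = 0 *)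
Fixpoint state_at (sig : nat -> bool) (k : nat) : hstate :=
  match k with
  | O => init_state L
  | S k' => step (state_at sig k') (sig k')
  end.

End Alg.

Definition pricing_loss (fx q : R) : R :=
  if Rle_dec q fx then fx - q else fx.

Fixpoint sumR (n : nat) (g : nat -> R) : R :=
  match n with O => 0 | S n' => sumR n' g + g n' end.

Fixpoint countN (n : nat) (p : nat -> bool) : nat :=
  match n with O => O | S n' => (countN n' p + if p n' then 1 else 0)%nat end.

(* Main.v *)
Require Import Defs.
From Stdlib Require Import Reals List Lra Lia Classical.
Open Scope R_scope.

Lemma kind_P L E tau0 st : kind_of L E tau0 st = Pricing ->
  ready L E st = true /\ INR (S (cnt st)) <= tau0.
Proof. unfold kind_of; destruct (ready L E st); try destruct Rlt_dec; try discriminate; split; auto; lra. Qed.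
Lemma kind_C L E tau0 st : kind_of L E tau0 st = Checking -> ready L E st = true.
Proof. unfold kind_of; destruct (ready L E st); try destruct Rlt_dec; try discriminate; auto. Qed.
Lemma kind_S L E tau0 st : kind_of L E tau0 st = Searching -> ready L E st = false.
Proof. unfold kind_of; destruct (ready L E st); try destruct Rlt_dec; try discriminate; auto. Qed.
Lemma ready_len L E st : ready L E st = true -> hi st - lo st < 10 * L * E.
Proof. unfold ready; destruct Rlt_dec; try discriminate; auto. Qed.

Lemma basic_inv L E tau0 s sig : 0 < L -> 0 <= s -> 1 <= tau0 -> forall k,
  0 <= lo (state_at L E tau0 s sig k) /\ lo (state_at L E tau0 s sig k) <= hi (state_at L E tau0 s sig k)
  /\ INR (cnt (state_at L E tau0 s sig k)) <= tau0.
Proof.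
  intros HL Hs Ht k; assert (0 <= L * s) by (apply Rmult_le_pos; lra); induction k as [|k IH]; simpl.
  - repeat split; lra.
  - set (st := state_at L E tau0 s sig k) in *.
    destruct IH as [H1 [H2 H3]].
    unfold step. destruct (surprised L E tau0 st (sig k)); simpl.
    + repeat split; lra.
    + destruct (kind_of L E tau0 st) eqn:Hk; simpl.
      * unfold midpoint_query. destruct (sig k); simpl;
        unfold Rmax, Rmin; repeat destruct Rle_dec; repeat split; lra.
      * destruct (kind_P _ _ _ _ Hk) as [_ Hc]. repeat split; try lra. exact Hc.
      * repeat split; lra.
Qed.

Definition corrupt L E tau0 s sig (fx : nat -> R) k : bool :=
  negb (Bool.eqb (sig k) (sgn (guess L E tau0 (state_at L E tau0 s sig k) - fx k))).

Lemma inv0 L E tau0 s sig fx zeta : 0 < L -> 0 <= s ->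
  (forall t, (t < zeta)%nat -> 0 <= fx t <= L) ->
  (forall t k, (t < zeta)%nat -> (k < zeta)%nat -> fx t <= fx k + L * s) ->
  (forall k, (k < zeta)%nat -> corrupt L E tau0 s sig fx k = false) ->
  forall k, (k <= zeta)%nat -> forall t, (t < zeta)%nat ->
  lo (state_at L E tau0 s sig k) <= fx t <= hi (state_at L E tau0 s sig k).
Proof.
  intros HL Hs Hf Hlip Hc k; induction k as [|k IH]; intros Hk t Ht; simpl.
  - apply Hf; auto.
  - assert (Hk' : (k < zeta)%nat) by lia.
    specialize (IH ltac:(lia)).
    pose proof (Hc k Hk') as Hck. unfold corrupt in Hck.
    set (st := state_at L E tau0 s sig k) in *.
    apply Bool.negb_false_iff, Bool.eqb_prop in Hck.
    unfold step. destruct (surprised L E tau0 st (sig k)); simpl.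
    + apply Hf; auto.
    + destruct (kind_of L E tau0 st) eqn:Hk2; simpl; try (apply IH; auto).
      unfold guess in Hck; rewrite Hk2 in Hck.
      pose proof (IH t Ht). pose proof (Hlip t k Ht Hk'). pose proof (Hlip k t Hk' Ht).
      pose proof (Hf t Ht).
      unfold midpoint_query. rewrite Hck. unfold sgn.
      destruct Rlt_dec; simpl; unfold Rmax, Rmin; repeat destruct Rle_dec; split; lra.
Qed.

Definition lossk L E tau0 s sig (fx : nat -> R) k : R :=
  match kind_of L E tau0 (state_at L E tau0 s sig k) with
  | Pricing => pricing_loss (fx k) (guess L E tau0 (state_at L E tau0 s sig k))
  | _ => 0 end.

Definition stale L E (fx : nat -> R) zeta st :=
  ready L E st = true /\ forall t, (t < zeta)%nat -> hi st < fx t.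

Lemma pot L E tau0 s sig fx zeta : 0 < L -> 0 < s -> s <= E -> 1 <= tau0 ->
  (forall t, (t < zeta)%nat -> 0 <= fx t <= L) ->
  (forall t k, (t < zeta)%nat -> (k < zeta)%nat -> fx t <= fx k + L * s) ->
  (forall t, (S t < zeta)%nat ->
       surprised L E tau0 (state_at L E tau0 s sig t) (sig t) = false) ->
  forall n, (n < zeta)%nat ->
  (stale L E fx zeta (state_at L E tau0 s sig n) ->
     sumR n (lossk L E tau0 s sig fx) <=
     11*L*E*INR n + L*(tau0+1)*INR (countN n (corrupt L E tau0 s sig fx))
     + L * INR (cnt (state_at L E tau0 s sig n))) /\
  (~ stale L E fx zeta (state_at L E tau0 s sig n) ->
     sumR n (lossk L E tau0 s sig fx) <=
     11*L*E*INR n + L*(tau0+1)*INR (countN n (corrupt L E tau0 s sig fx))).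
Proof.
  intros HL Hs HsE Ht Hf Hlip Hns.
  assert (HLE : L * s <= L * E) by (apply Rmult_le_compat_l; lra).
  assert (HE : 0 < E) by lra.
  assert (HLE0 : 0 < L * E) by (apply Rmult_lt_0_compat; lra).
  induction n as [|n IH]; intros Hn.
  - simpl. split; intros _; lra.
  - specialize (IH ltac:(lia)).
    assert (Hn' : (n < zeta)%nat) by lia.
    pose proof (Hns n Hn) as Hsur.
    pose proof (basic_inv L E tau0 s sig HL ltac:(lra) Ht n) as [Hlo0 [Hlohi Hcnt]].
    cbn [sumR countN]. rewrite plus_INR, S_INR.
    set (C := INR (countN n (corrupt L E tau0 s sig fx))) in *.
    assert (HC0 : 0 <= C) by apply pos_INR.
    set (st := state_at L E tau0 s sig n) in *.
    assert (Hstep : state_at L E tau0 s sig (S n) = step L E tau0 s st (sig n)) by reflexivity.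
    assert (Hloss : lossk L E tau0 s sig fx n = match kind_of L E tau0 st with
      | Pricing => pricing_loss (fx n) (guess L E tau0 st) | _ => 0 end) by reflexivity.
    rewrite Hstep, Hloss. unfold step. rewrite Hsur.
    pose proof (pos_INR (cnt st)) as Hc0.
    assert (HIn : 0 <= INR n) by apply pos_INR.
    assert (H11 : 0 <= 11 * L * E * INR n) by (apply Rmult_le_pos; lra).
    destruct IH as [IH1 IH2].
    set (cr := INR (if corrupt L E tau0 s sig fx n then 1%nat else 0%nat)).
    assert (Hcr0 : 0 <= L * (tau0 + 1) * cr).
    { apply Rmult_le_pos; [nra|]. unfold cr; apply pos_INR. }
    assert (Hcr1 : corrupt L E tau0 s sig fx n = true -> L * (tau0 + 1) * cr = L * (tau0 + 1)).
    { intros Hq; unfold cr; rewrite Hq; simpl; ring. }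
    assert (Hcorr : corrupt L E tau0 s sig fx n = negb (Bool.eqb (sig n) (sgn (guess L E tau0 st - fx n)))) by reflexivity.
    assert (Hexp : 11 * L * E * (INR n + 1) + L * (tau0 + 1) * (C + cr)
                   = 11 * L * E * INR n + L * (tau0 + 1) * C + 11 * L * E + L * (tau0 + 1) * cr) by ring.
    rewrite Hexp.
    destruct (kind_of L E tau0 st) eqn:Hk.
    +
      assert (Hnst : ~ stale L E fx zeta st).
      { intros [Hr _]. rewrite (kind_S _ _ _ _ Hk) in Hr. discriminate. }
      specialize (IH2 Hnst).
      destruct (midpoint_query L s (lo st) (hi st) (sig n)) as [a b]. simpl.
      split; intros _.
      * assert (0 <= L * INR (cnt st)) by (apply Rmult_le_pos; lra). lra.
      * lra.
    +
      destruct (kind_P _ _ _ _ Hk) as [Hr Hcn].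
      assert (Hsig : sig n = false).
      { unfold surprised in Hsur; rewrite Hk in Hsur; exact Hsur. }
      assert (Hg : guess L E tau0 st = lo st) by (unfold guess; rewrite Hk; reflexivity).
      rewrite Hg in Hcorr |- *.
      pose proof (Hf n Hn') as Hfn.
      assert (Hcs : INR (cnt (HState (lo st) (hi st) (S (cnt st)))) = INR (cnt st) + 1)
        by (simpl cnt; apply S_INR).
      rewrite Hcs.
      change (stale L E fx zeta (HState (lo st) (hi st) (S (cnt st)))) with (stale L E fx zeta st).
      assert (Hle : pricing_loss (fx n) (lo st) <= L).
      { unfold pricing_loss; destruct Rle_dec; lra. }
      destruct (classic (stale L E fx zeta st)) as [Hst|Hst].
      * specialize (IH1 Hst). split; intros H; [|contradiction]. lra.
      * specialize (IH2 Hst). split; intros H; [contradiction|].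
        unfold pricing_loss; destruct Rle_dec as [Hl|Hl].
        -- destruct (Rle_dec (fx n - lo st) (11 * L * E)) as [Hm|Hm]; [lra|].
           exfalso; apply Hst. split; [exact Hr|].
           intros t Htz. pose proof (Hlip n t Hn' Htz). pose proof (ready_len _ _ _ Hr). lra.
        -- assert (Hq : corrupt L E tau0 s sig fx n = true).
           { rewrite Hcorr, Hsig. unfold sgn. destruct Rlt_dec; [reflexivity|lra]. }
           rewrite (Hcr1 Hq). nra.
    +
      pose proof (kind_C _ _ _ _ Hk) as Hr.
      assert (Hsig : sig n = true).
      { unfold surprised in Hsur; rewrite Hk in Hsur; destruct (sig n); simpl in Hsur; congruence. }
      assert (Hg : guess L E tau0 st = hi st) by (unfold guess; rewrite Hk; reflexivity).
      rewrite Hg in Hcorr.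
      change (stale L E fx zeta (HState (lo st) (hi st) 0)) with (stale L E fx zeta st).
      simpl cnt. simpl INR.
      destruct (classic (stale L E fx zeta st)) as [Hst|Hst].
      * specialize (IH1 Hst). split; intros H; [|contradiction].
        assert (Hq : corrupt L E tau0 s sig fx n = true).
        { rewrite Hcorr, Hsig. unfold sgn. destruct Rlt_dec as [Hl|Hl]; [|reflexivity].
          destruct Hst as [_ Hst]. specialize (Hst n Hn'). lra. }
        rewrite (Hcr1 Hq).
        assert (L * INR (cnt st) <= L * tau0) by (apply Rmult_le_compat_l; lra). nra.
      * specialize (IH2 Hst). split; intros H; [contradiction|]. lra.
Qed.

Lemma sumR_le n g c : (forall k, (k < n)%nat -> g k <= c) -> sumR n g <= INR n * c.
Proof.
  induction n as [|n IH]; intros H.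
  - simpl; lra.
  - change (sumR (S n) g) with (sumR n g + g n). rewrite S_INR. specialize (IH (fun k Hk => H k ltac:(lia))). specialize (H n ltac:(lia)). lra.
Qed.

Lemma countN_zero n p : countN n p = 0%nat -> forall k, (k < n)%nat -> p k = false.
Proof.
  induction n as [|n IH]; intros H k Hk; simpl in *; [lia|].
  destruct (p n) eqn:Hp; [lia|]. rewrite Nat.add_0_r in H.
  destruct (Nat.eq_dec k n); [subst; auto|]. apply IH; auto; lia.
Qed.

Lemma main_bound L E tau0 s sig fx zeta : 0 < L -> 0 < s -> s <= E -> 1 <= tau0 ->
  (forall t, (t < zeta)%nat -> 0 <= fx t <= L) ->
  (forall t k, (t < zeta)%nat -> (k < zeta)%nat -> fx t <= fx k + L * s) ->
  (forall t, (S t < zeta)%nat ->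
       surprised L E tau0 (state_at L E tau0 s sig t) (sig t) = false) ->
  sumR zeta (lossk L E tau0 s sig fx) <=
  20 * L * (INR zeta * E + INR (countN zeta (corrupt L E tau0 s sig fx)) * tau0).
Proof.
  intros HL Hs HsE Ht Hf Hlip Hns.
  assert (HE : 0 < E) by lra.
  assert (HLE0 : 0 < L * E) by (apply Rmult_lt_0_compat; lra).
  pose proof (pos_INR zeta) as Hz. pose proof (pos_INR (countN zeta (corrupt L E tau0 s sig fx))) as Hx.
  destruct (Nat.eq_dec (countN zeta (corrupt L E tau0 s sig fx)) 0) as [H0|H0].
  - rewrite H0. simpl INR.
    pose proof (countN_zero _ _ H0) as Hc.
    assert (Hb : sumR zeta (lossk L E tau0 s sig fx) <= INR zeta * (10 * L * E)).
    { apply sumR_le. intros k Hk.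
      pose proof (inv0 L E tau0 s sig fx zeta HL ltac:(lra) Hf Hlip Hc k ltac:(lia) k Hk) as Hi.
      unfold lossk. set (st := state_at L E tau0 s sig k) in *.
      destruct (kind_of L E tau0 st) eqn:Hk2; try lra.
      destruct (kind_P _ _ _ _ Hk2) as [Hr _]. pose proof (ready_len _ _ _ Hr).
      unfold guess; rewrite Hk2. unfold pricing_loss; destruct Rle_dec; lra. }
    nra.
  - destruct zeta as [|n]; [simpl in H0; lia|].
    pose proof (pot L E tau0 s sig fx (S n) HL Hs HsE Ht Hf Hlip Hns n ltac:(lia)) as [P1 P2].
    pose proof (basic_inv L E tau0 s sig HL ltac:(lra) Ht n) as [Hlo0 [_ Hcnt]].
    assert (Hsn : sumR n (lossk L E tau0 s sig fx) <=
       11*L*E*INR n + L*(tau0+1)*INR (countN n (corrupt L E tau0 s sig fx)) + L * tau0).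
    { assert (L * INR (cnt (state_at L E tau0 s sig n)) <= L * tau0) by (apply Rmult_le_compat_l; lra).
      assert (0 <= L * tau0) by nra.
      destruct (classic (stale L E fx (S n) (state_at L E tau0 s sig n))) as [Hs'|Hs'];
        [specialize (P1 Hs') | specialize (P2 Hs')]; lra. }
    assert (Hln : lossk L E tau0 s sig fx n <= L).
    { unfold lossk. pose proof (Hf n ltac:(lia)).
      destruct (kind_of L E tau0 (state_at L E tau0 s sig n)) eqn:Hk2; try lra.
      unfold guess; rewrite Hk2; unfold pricing_loss; destruct Rle_dec; lra. }
    assert (HcS : INR (countN n (corrupt L E tau0 s sig fx)) <= INR (countN (S n) (corrupt L E tau0 s sig fx))).
    { apply le_INR. simpl. lia. }
    assert (H1 : 1 <= INR (countN (S n) (corrupt L E tau0 s sig fx))).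
    { replace 1 with (INR 1) by reflexivity. apply le_INR. lia. }
    change (sumR (S n) (lossk L E tau0 s sig fx)) with
      (sumR n (lossk L E tau0 s sig fx) + lossk L E tau0 s sig fx n).
    rewrite S_INR in *.
    set (X := INR (countN (S n) (corrupt L E tau0 s sig fx))) in *.
    set (Cn := INR (countN n (corrupt L E tau0 s sig fx))) in *.
    assert (L * (tau0 + 1) * Cn <= L * (tau0 + 1) * X) by (apply Rmult_le_compat_l; nra).
    assert (L * (tau0 + 1) <= L * (tau0+1) * X).
    { rewrite <- (Rmult_1_r (L*(tau0+1))) at 1. apply Rmult_le_compat_l; [apply Rmult_le_pos|]; lra. }
    assert (HLX : 0 <= L * X) by (apply Rmult_le_pos; lra).
    assert (L * X * (tau0 + 1) <= L * X * (2 * tau0)) by (apply Rmult_le_compat_l; lra).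
    assert (0 <= L * X * tau0) by (apply Rmult_le_pos; lra).
    assert (0 <= L * E * INR n) by (pose proof (pos_INR n); apply Rmult_le_pos; lra).
    lra.
Qed.

Lemma fold_max_le (l : list R) c : 0 <= c -> (forall a, In a l -> a <= c) -> fold_right Rmax 0 l <= c.
Proof.
  induction l as [|a l IH]; intros H0 H; simpl; auto.
  apply Rmax_lub; [apply H; left; auto| apply IH; auto; intros; apply H; right; auto].
Qed.

Lemma supnorm_le d v c : 0 <= c -> (forall i, (i < d)%nat -> Rabs (v i) <= c) -> supnorm d v <= c.
Proof.
  intros H0 H. unfold supnorm. apply fold_max_le; auto.
  intros a Ha. apply in_map_iff in Ha. destruct Ha as [i [<- Hi]].
  apply in_seq in Hi. apply H. lia.
Qed.

Theorem lemma29 :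
  exists K : R,
  forall (d T : nat) (L tau0 : R) (f : (nat -> R) -> R)
         (m : nat) (kidx : nat -> nat)
         (x : nat -> nat -> R) (sig : nat -> bool) (zeta : nat),
    (1 <= d)%nat -> (2 <= T)%nat -> 0 < L -> 1 <= tau0 ->
    valid_valuation d L f ->
    (* I_j is a cell of the uniform grid of [0,1]^d with side 1/m = Theta(eta0) *)
    (0 < m)%nat -> (forall i, (i < d)%nat -> (kidx i < m)%nat) ->
    eta0 d T / 2 <= / INR m <= eta0 d T ->
    (* the run: zeta queries whose contexts lie in I_j *)
    (zeta <= T)%nat ->
    (forall t, (t < zeta)%nat -> in_unit_cube d (x t) /\ in_grid_cube d (/ INR m) kidx (x t)) ->
    (* no surprise before the last query of the run *)
    (forall t, (S t < zeta)%nat ->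
       surprised L (eta0 d T) tau0
         (state_at L (eta0 d T) tau0 (/ INR m) sig t) (sig t) = false) ->
    let st t := state_at L (eta0 d T) tau0 (/ INR m) sig t in
    let q t := guess L (eta0 d T) tau0 (st t) in
    let xi := countN zeta (fun t =>
                negb (Bool.eqb (sig t) (sgn (q t - f (x t))))) in
    sumR zeta (fun t =>
       match kind_of L (eta0 d T) tau0 (st t) with
       | Pricing => pricing_loss (f (x t)) (q t)
       | _ => 0
       end)
    <= K * L * (INR zeta * eta0 d T + INR xi * tau0).
Proof.
  exists 20.
  intros d T L tau0 f m kidx x sig zeta Hd HT HL Ht [Hf01 Hlipf] Hm Hk [Hm1 Hm2] Hz Hx Hns st q xi.
  assert (Hs : 0 < / INR m) by (apply Rinv_0_lt_compat, lt_0_INR; lia).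
  assert (Hf : forall t, (t < zeta)%nat -> 0 <= f (x t) <= L).
  { intros t Ht'. apply Hf01, (Hx t Ht'). }
  assert (Hlip : forall t k, (t < zeta)%nat -> (k < zeta)%nat -> f (x t) <= f (x k) + L * / INR m).
  { intros t k Ht' Hk'. destruct (Hx t Ht') as [Hu1 Hg1]. destruct (Hx k Hk') as [Hu2 Hg2].
    pose proof (Hlipf (x t) (x k) Hu1 Hu2) as Hl.
    assert (Hsn : supnorm d (fun i => x t i - x k i) <= / INR m).
    { apply supnorm_le; [lra|]. intros i Hi.
      specialize (Hg1 i Hi). specialize (Hg2 i Hi).
      assert (Heq : (INR (kidx i) + 1) * / INR m = INR (kidx i) * / INR m + / INR m) by ring.
      apply Rabs_le. lra. }
    assert (L * supnorm d (fun i => x t i - x k i) <= L * / INR m) by (apply Rmult_le_compat_l; lra).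
    pose proof (Rle_abs (f (x t) - f (x k))). lra. }
  pose proof (main_bound L (eta0 d T) tau0 (/ INR m) sig (fun t => f (x t)) zeta HL Hs Hm2 Ht Hf Hlip Hns) as H.
  exact H.
Qed.
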